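(* Let $\mathbf X=(X_1,\dots,X_n)$ have mutually independent components, each taking values in a finite set $V_i\subset\mathbb{R}$, let $f:\mathbb{R}^n\to\mathbb{R}$ be arbitrary, let $c_1,\dots,c_n\ge 0$ and $C\ge0$, and set $\overline C=\big(\sum_{i=1}^n c_i\big)-C$. Define $\overline{\mathrm{EVar}}(S)=\mathrm{EVar}([n]\setminus S)$ for $S\subseteq[n]$. Then: (i) $\overline{\mathrm{EVar}}$ is monotone non-decreasing ($S_1\subseteq S_2\Rightarrow \overline{\mathrm{EVar}}(S_1)\le\overline{\mathrm{EVar}}(S_2)$) and submodular (for $S_1\subset S_2\subseteq[n]$ and $x\in[n]\setminus S_2$, $\overline{\mathrm{EVar}}(S_1\cup\{x\})-\overline{\mathrm{EVar}}(S_1)\ge \overline{\mathrm{EVar}}(S_2\cup\{x\})-\overline{\mathrm{EVar}}(S_2)$); (ii) for every $\alpha\ge1$, a set $S$ satisfies $\sum_{i\in S}c_i\ge\overline C$ and $\overline{\mathrm{EVar}}(S)\le\alpha\cdot\min\{\overline{\mathrm{EVar}}(S'):\sum_{i\in S'}c_i\ge \overline C\}$ if and only if $T=[n]\setminus S$ satisfies $\sum_{i\in T}c_i\le C$ and $\mathrm{EVar}(T)\le\alpha\cdot\min\{\mathrm{EVar}(T'):\sum_{i\in T'}c_i\le C\}$.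
   Context: For $T=\{i_1<\dots<i_k\}\subseteq[n]$ write $\mathbf X_T=(X_{i_1},\dots,X_{i_k})$ and $\mathbf V_T=V_{i_1}\times\dots\times V_{i_k}$. Define $$\mathrm{EVar}(T)=\sum_{\mathbf v\in\mathbf V_T,\ \Pr[\mathbf X_T=\mathbf v]>0}\Pr[\mathbf X_T=\mathbf v]\cdot \mathrm{Var}\big(f(\mathbf X)\mid \mathbf X_T=\mathbf v\big),$$ with $\mathrm{EVar}(\emptyset)=\mathrm{Var}(f(\mathbf X))$. The MinVar problem is: minimize $\mathrm{EVar}(T)$ over $T\subseteq[n]$ subject to $\sum_{i\in T}c_i\le C$ (here $c_i$ is the cost of cleaning object $i$ and $C$ the budget). *)

(* Defs.v *)
From HB Require Import structures.
From mathcomp Require Import all_boot all_order all_algebra.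
Set Implicit Arguments. Unset Strict Implicit. Unset Printing Implicit Defensive.
Import Order.TTheory GRing.Theory Num.Theory.
Local Open Scope ring_scope.

Section EVar.
Variables (R : realFieldType) (n : nat) (U : finType).
(* U : a finite set of "labels" whose embedding emb into R contains every V_i;
   p i u = Pr[X_i = emb u]; the components are independent, so the law of
   the outcome x : 'I_n -> U is the product measure. *)
Variables (emb : U -> R) (p : 'I_n -> U -> R) (f : 'rV[R]_n -> R).

Definition outcome := {ffun 'I_n -> U}.

Definition Xval (x : outcome) : 'rV[R]_n := \row_i emb (x i).

Definition Pr (x : outcome) : R := \prod_i p i (x i).

Definition PrE (A : pred outcome) : R := \sum_(x | A x) Pr x.

Definition condE (A : pred outcome) (g : outcome -> R) : R :=
  (\sum_(x | A x) Pr x * g x) / PrE A.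

Definition condVar (A : pred outcome) : R :=
  condE A (fun x => (f (Xval x) - condE A (fun y => f (Xval y))) ^+ 2).

Definition eventT (T : {set 'I_n}) (v : {ffun {i : 'I_n | i \in T} -> U})
  : pred outcome :=
  fun x => [forall j : {i : 'I_n | i \in T}, emb (x (val j)) == emb (v j)].

Definition EVar (T : {set 'I_n}) : R :=
  \sum_(v : {ffun {i : 'I_n | i \in T} -> U} | 0 < PrE (eventT v))
     PrE (eventT v) * condVar (eventT v).

Definition EVarBar (S : {set 'I_n}) : R := EVar (~: S).

Definition Var : R := condVar predT.

End EVar.

(* min over a finite family, seeded with a value attained by a feasible element *)
Definition minOver (R : realFieldType) (T : finType) (P : pred T) (F : T -> R)
  (seed : R) : R := \big[Num.min/seed]_(t | P t) F t.

(* Main.v *)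
Require Import Defs.
From HB Require Import structures.
From mathcomp Require Import all_boot all_order all_algebra.
From mathcomp Require Import ring lra.
Set Implicit Arguments. Unset Strict Implicit. Unset Printing Implicit Defensive.
Import Order.TTheory GRing.Theory Num.Theory.
Local Open Scope ring_scope.

Section Proofs.
Variables (R : realFieldType) (n : nat) (U : finType).
Variables (emb : U -> R) (p : 'I_n -> U -> R) (f : 'rV[R]_n -> R).
Hypothesis emb_inj : injective emb.
Hypothesis p_ge0 : forall i u, 0 <= p i u.
Hypothesis p_sum1 : forall i, \sum_u p i u = 1.

Local Notation outcome := (outcome n U).
Local Notation Pr := (Pr p).

Definition W (A : {set 'I_n}) (x y : outcome) : R :=
  \prod_i (if i \in A then (y i == x i)%:R else p i (y i)).

Definition E (A : {set 'I_n}) (g : outcome -> R) (x : outcome) : R :=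
  \sum_y W A x y * g y.

Definition Bf (g h : outcome -> R) : R := \sum_x Pr x * g x * h x.
Definition N (g : outcome -> R) : R := \sum_x Pr x * (g x) ^+ 2.

Lemma sum_prod (G : 'I_n -> U -> R) :
  \sum_(y : outcome) \prod_i G i (y i) = \prod_i \sum_u G i u.
Proof. by rewrite bigA_distr_bigA. Qed.

Lemma sum_delta (a : U) (g : U -> R) : \sum_u (u == a)%:R * g u = g a.
Proof.
rewrite (bigD1 a) //= eqxx mul1r big1 ?addr0 // => u /negbTE ->; by rewrite mul0r.
Qed.

Lemma sum_delta' (a : U) (g : U -> R) : \sum_u g u * (a == u)%:R = g a.
Proof.
rewrite -[RHS](sum_delta a g); apply: eq_bigr => u _; by rewrite eq_sym mulrC.
Qed.

Lemma Pr_ge0 x : 0 <= Pr x.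
Proof. by apply: prodr_ge0 => i _. Qed.

Lemma W_comp A B x z : \sum_y W A x y * W B y z = W (A :&: B) x z.
Proof.
rewrite /W.
transitivity (\sum_(y : outcome) \prod_i
   ((if i \in A then (y i == x i)%:R else p i (y i)) *
    (if i \in B then (z i == y i)%:R else p i (z i)))).
  by apply: eq_bigr => y _; rewrite big_split.
rewrite (sum_prod (fun i u => (if i \in A then (u == x i)%:R else p i u) *
    (if i \in B then (z i == u)%:R else p i (z i)))).
apply: eq_bigr => i _; rewrite inE.
case: (i \in A); case: (i \in B) => /=.
- by rewrite sum_delta.
- by rewrite sum_delta.
- by rewrite sum_delta'.
- by rewrite -mulr_suml p_sum1 mul1r.
Qed.

Lemma E_comp A B g x : E A (E B g) x = E (A :&: B) g x.
Proof.
rewrite /E.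
under eq_bigr do rewrite big_distrr.
rewrite exchange_big /=; apply: eq_bigr => z _.
by rewrite -W_comp big_distrl; apply: eq_bigr => y _; rewrite mulrA.
Qed.

Lemma E_ext A g g' x : g =1 g' -> E A g x = E A g' x.
Proof. by move=> H; apply: eq_bigr => y _; rewrite H. Qed.

Lemma EB A g h x : E A (fun y => g y - h y) x = E A g x - E A h x.
Proof. by rewrite /E -sumrB; apply: eq_bigr => y _; rewrite mulrBr. Qed.

Lemma PrW A x y : Pr x * W A x y = Pr y * W A y x.
Proof.
rewrite /Pr /W -!big_split /=; apply: eq_bigr => i _.
case: (i \in A); last by rewrite mulrC.
case: (eqVneq (y i) (x i)) => [->|ne]; first by [].
rewrite /=.
by rewrite !mulr0.
Qed.

Lemma selfadj A g h : Bf g (E A h) = Bf (E A g) h.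
Proof.
rewrite /Bf /E.
transitivity (\sum_x \sum_y Pr x * W A x y * g x * h y).
  apply: eq_bigr => x _; rewrite big_distrr /=; apply: eq_bigr => y _; ring.
rewrite exchange_big /=; apply: eq_bigr => y _.
rewrite big_distrr big_distrl /=; apply: eq_bigr => x _.
rewrite PrW; ring.
Qed.

Lemma N_ge0 g : 0 <= N g.
Proof. by apply: sumr_ge0 => x _; apply: mulr_ge0; [exact: Pr_ge0|exact: sqr_ge0]. Qed.

Lemma Pyth A g : N (fun x => g x - E A g x) = N g - N (E A g).
Proof.
have h1 : Bf g (E A g) = N (E A g).
  rewrite (_ : Bf g (E A g) = Bf g (E A (E A g))); last first.
    by apply: eq_bigr => x _; rewrite E_comp setIid.
  by rewrite selfadj /Bf /N; apply: eq_bigr => x _; rewrite expr2 mulrA.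
have : N (fun x => g x - E A g x) = N g - Bf g (E A g) - Bf g (E A g) + N (E A g).
  rewrite /N /Bf -!sumrB -big_split /=; apply: eq_bigr => x _; ring.
by rewrite h1 => ->; ring.
Qed.

Lemma N_ext g g' : g =1 g' -> N g = N g'.
Proof. by move=> H; apply: eq_bigr => x _; rewrite H. Qed.

Lemma contract A g : N (E A g) <= N g.
Proof. by rewrite -subr_ge0 -Pyth; exact: N_ge0. Qed.


Definition restr (T : {set 'I_n}) (x : outcome) : {ffun {i : 'I_n | i \in T} -> U} :=
  [ffun j => x (val j)].

Lemma ev_restr T v x : eventT emb v x = (v == restr T x).
Proof.
apply/forallP/eqP => [H|->].
  apply/ffunP => j; rewrite ffunE; apply/esym/emb_inj/eqP; exact: H.
by move=> j; rewrite ffunE.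
Qed.

Lemma part (T : {set 'I_n}) (G : {ffun {i : 'I_n | i \in T} -> U} -> outcome -> R) :
  \sum_(v : {ffun {i : 'I_n | i \in T} -> U}) \sum_(x | eventT emb v x) G v x = \sum_x G (restr T x) x.
Proof.
under eq_bigr do rewrite big_mkcond.
rewrite exchange_big /=; apply: eq_bigr => x _.
under eq_bigr do rewrite ev_restr.
by rewrite -big_mkcond big_pred1_eq.
Qed.

Lemma restrW T x y :
  (restr T x == restr T y)%:R * Pr y = (\prod_(i in T) p i (x i)) * W T x y.
Proof.
have eW : W T x y = \prod_(i in T) (y i == x i)%:R * \prod_(i | i \notin T) p i (y i).
  rewrite /W (bigID (mem T)) /=; congr (_ * _); apply: eq_bigr => i.
    by move=> ->.
  by move=> /negbTE ->.
have ePr : Pr y = \prod_(i in T) p i (y i) * \prod_(i | i \notin T) p i (y i).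
  by rewrite /Pr (bigID (mem T)).
case: (boolP [forall i in T, y i == x i]) => H.
  have e : restr T x = restr T y.
    apply/ffunP => j; rewrite !ffunE; apply/esym/eqP.
    exact: (forall_inP H) _ (valP j).
  have one : \prod_(i in T) (y i == x i)%:R = 1 :> R.
    by apply: big1 => i Hi; rewrite (eqP ((forall_inP H) _ Hi)) eqxx.
  rewrite e eqxx eW ePr one !mul1r.
  congr (_ * _); apply: eq_bigr => i Hi.
  by rewrite (eqP ((forall_inP H) _ Hi)).
move: H => /forall_inPn [i Hi ne].
have hne : restr T x != restr T y.
  apply/eqP => /ffunP /(_ (exist _ i Hi)); rewrite !ffunE /= => exy.
  by rewrite exy eqxx in ne.
rewrite (negbTE hne) mul0r eW [\prod_(j in T) (_ == _)%:R](bigD1 i Hi) /= (negbTE ne) !mul0r mulr0.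
by [].
Qed.

Lemma W_sum1 T x : \sum_y W T x y = 1.
Proof.
rewrite /W (sum_prod (fun i u => if i \in T then (u == x i)%:R else p i u)).
apply: big1 => i _; case: (i \in T); last exact: p_sum1.
by rewrite (bigD1 (x i)) //= eqxx big1 ?addr0 // => u /negbTE ->.
Qed.

Variable F : outcome -> R.

Lemma condE_restr T x : Pr x != 0 ->
  condE p (eventT emb (restr T x)) F = E T F x.
Proof.
move=> Hx; set c := \prod_(i in T) p i (x i).
have key y : (eventT emb (restr T x) y)%:R * Pr y = c * W T x y.
  by rewrite ev_restr restrW.
have num : \sum_(y | eventT emb (restr T x) y) Pr y * F y = c * E T F x.
  rewrite big_mkcond /E big_distrr; apply: eq_bigr => y _; rewrite -[RHS]/(c * (W T x y * F y)) mulrA -key.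
  by case: (eventT _ _ y); rewrite /= ?mul1r ?mul0r.
have den : PrE p (eventT emb (restr T x)) = c.
  rewrite /PrE big_mkcond -[RHS]mulr1 -(W_sum1 T x) big_distrr; apply: eq_bigr => y _.
  by rewrite -[RHS]/(c * W T x y) -key; case: (eventT _ _ y); rewrite /= ?mul1r ?mul0r.
have cne : c != 0.
  apply/eqP => c0; move/eqP: Hx; apply.
  by move: (key x); rewrite c0 mul0r ev_restr eqxx mul1r.
rewrite /condE; transitivity ((c * E T F x) / c).
  by congr (_ / _); [exact: num | exact: den].
by rewrite mulrC mulrA mulVf // mul1r.
Qed.

Lemma EVar_eq T : (forall x, f (Xval emb x) = F x) -> EVar emb p f T = N F - N (E T F).
Proof.
move=> hF; rewrite -Pyth /EVar big_mkcond /=.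
transitivity (\sum_(v : {ffun {i : 'I_n | i \in T} -> U}) \sum_(x | eventT emb v x)
   Pr x * (F x - condE p (eventT emb v) F) ^+ 2).
  apply: eq_bigr => v _.
  have hP : 0 <= PrE p (eventT emb v) by apply: sumr_ge0 => x _; exact: Pr_ge0.
  have eS : condVar emb p f (eventT emb v) * PrE p (eventT emb v) =
     (\sum_(x | eventT emb v x) Pr x * (F x - condE p (eventT emb v) F) ^+ 2)
     / PrE p (eventT emb v) * PrE p (eventT emb v).
    rewrite /condVar /condE; congr (_ / _ * _).
      apply: eq_bigr => x _; rewrite hF; congr (_ * (_ - _) ^+ 2).
      by congr (_ / _); apply: eq_bigr => y _; rewrite hF.
  case: ifP => hpos.
    by rewrite mulrC eS divfK // gt_eqF.
  have P0 : PrE p (eventT emb v) = 0.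
    by apply/eqP; rewrite eq_le hP andbT leNgt hpos.
  symmetry; apply: big1 => x hx.
  by rewrite (psumr_eq0P (fun y _ => Pr_ge0 y) P0 hx) mul0r.
rewrite (part (fun v x => Pr x * (F x - condE p (eventT emb v) F) ^+ 2)).
apply: eq_bigr => x _.
case: (eqVneq (Pr x) 0) => [->|hx]; first by rewrite !mul0r.
by rewrite condE_restr.
Qed.

End Proofs.

Theorem mainTheorem4 (R : realFieldType) (n : nat) (U : finType)
  (emb : U -> R) (p : 'I_n -> U -> R) (f : 'rV[R]_n -> R)
  (c : 'I_n -> R) (C : R) :
  injective emb ->
  (forall i u, 0 <= p i u) ->
  (forall i, \sum_u p i u = 1) ->
  (forall i, 0 <= c i) ->
  0 <= C ->
  let Cbar := (\sum_i c i) - C in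
  let EV := EVar emb p f in
  let EVb := EVarBar emb p f in
  (* (i) monotone and submodular *)
  ((forall S1 S2 : {set 'I_n}, S1 \subset S2 -> EVb S1 <= EVb S2) /\
   (forall (S1 S2 : {set 'I_n}) (x : 'I_n), S1 \subset S2 -> x \notin S2 ->
      EVb (x |: S2) - EVb S2 <= EVb (x |: S1) - EVb S1)) /\
  (* (ii) approximation equivalence *)
  (forall alpha : R, 1 <= alpha -> forall S : {set 'I_n},
     ((Cbar <= \sum_(i in S) c i) /\
      EVb S <= alpha * minOver (fun S' : {set 'I_n} => Cbar <= \sum_(i in S') c i)
                               EVb (EVb setT))
     <->
     ((\sum_(i in ~: S) c i <= C) /\
      EV (~: S) <= alpha * minOver (fun T' : {set 'I_n} => \sum_(i in T') c i <= C)
                               EV (EV set0))).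
Proof.
move=> inj pge psum cge Cge Cbar EV EVb.
pose F := fun x : outcome n U => f (Xval emb x).
have EVE T : EVar emb p f T = N p F - N p (E p T F) by apply: EVar_eq.
have hs (S : {set 'I_n}) : \sum_i c i = \sum_(i in S) c i + \sum_(i in ~: S) c i.
  rewrite (bigID (mem S)) /=; congr (_ + _); apply: eq_bigl => i; by rewrite inE.
split; [split|].
- move=> S1 S2 H; rewrite /EVb /EVarBar !EVE.
  have sub : ~: S2 \subset ~: S1 by rewrite setCS.
  have : N p (E p (~: S2) F) <= N p (E p (~: S1) F).
    have -> : N p (E p (~: S2) F) = N p (E p (~: S2) (E p (~: S1) F)).
      by apply: N_ext => y; rewrite E_comp // (setIidPl sub).
    exact: contract.
  lra.
- move=> S1 S2 x H hx; rewrite /EVb /EVarBar !EVE.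
  have setI_a : ~: (x |: S1) :&: ~: S1 = ~: (x |: S1).
    by apply/setP => i; rewrite !inE; case: (i == x); case: (i \in S1).
  have setI_b : ~: (x |: S2) :&: ~: S2 = ~: (x |: S2).
    by apply/setP => i; rewrite !inE; case: (i == x); case: (i \in S2).
  have setI_c : ~: S2 :&: ~: S1 = ~: S2.
    by apply/setP => i; rewrite !inE; move: (subsetP H i); case: (i \in S1); case: (i \in S2) => // /(_ isT).
  have setI_d : ~: S2 :&: ~: (x |: S1) = ~: (x |: S2).
    by apply/setP => i; rewrite !inE; move: (subsetP H i); case: (i \in S1); case: (i \in S2); case: (i == x) => // /(_ isT).
  pose H1 := fun y => E p (~: S1) F y - E p (~: (x |: S1)) F y.
  have e1 : N p H1 = N p (E p (~: S1) F) - N p (E p (~: (x |: S1)) F).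
    have -> : N p (E p (~: (x |: S1)) F) = N p (E p (~: (x |: S1)) (E p (~: S1) F)).
      by apply: N_ext => y; rewrite E_comp // setI_a.
    rewrite -Pyth //; apply: N_ext => y; rewrite /H1 E_comp // setI_a.
    by [].
  have e2 : N p (E p (~: S2) H1) = N p (E p (~: S2) F) - N p (E p (~: (x |: S2)) F).
    have -> : N p (E p (~: (x |: S2)) F) = N p (E p (~: (x |: S2)) (E p (~: S2) F)).
      by apply: N_ext => y; rewrite E_comp // setI_b.
    rewrite -Pyth //; apply: N_ext => y; rewrite /H1 EB !E_comp // setI_c setI_d.
    by rewrite setI_b.
  have := contract pge psum (~: S2) H1.
  lra.
- move=> alpha _ S.
  have eqmin : minOver (fun S' : {set 'I_n} => Cbar <= \sum_(i in S') c i) EVb (EVb setT)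
      = minOver (fun T' : {set 'I_n} => \sum_(i in T') c i <= C) EV (EV set0).
    rewrite /minOver /EVb /EVarBar /EV setCT (reindex_inj (@setC_inj _)) /=.
    under eq_bigr do rewrite setCK.
    apply: eq_bigl => T; rewrite /Cbar (hs T).
    by apply/idP/idP => h; lra.
  rewrite eqmin /Cbar (hs S) /EVb /EVarBar.
  by split => -[h1 h2]; split => //; lra.
Qed.
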